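(* Let $P(t)=\binom{r+t}{r}-\binom{r+t-d}{r}$, let $x\in\mathrm{Hilb}^P(\mathbb{P}^r_k)$ be a closed point, $D\ge0$ an integer and $\gamma=(c_0,\dots,c_r)\in\Gamma(T)$ nonzero. Then $$\min_{m\in\Xi_{x,d+D}}\langle \gamma,m\rangle=|M_D|\cdot\min_{m\in\Xi_{x,d}}\langle\gamma,m\rangle,$$ and consequently $|\Delta_{x,d+D}|=|M_D|\cdot|\Delta_{x,d}|$.
   Context: Let $k$ be an algebraically closed field, $S=k[x_0,\dots,x_r]$, $S_t$ its degree-$t$ part, $M_t$ the set of monomials of degree $t$. With $P(t)=\binom{r+t}{r}-\binom{r+t-d}{r}$, a closed point $x$ of $\mathrm{Hilb}^P(\mathbb{P}^r_k)$ is a hypersurface $V(f)$, $0\ne f\in S_d$. For $t\ge d$ let $Q(t)=|M_{t-d}|$ and $\phi_t(x)=[\bigwedge^{Q(t)}(f\cdot S_{t-d})]\in\mathbb{P}(\bigwedge^{Q(t)}S_t)$. The vector space $\bigwedge^{Q(t)}S_t$ has basis the wedges $m_1\wedge\cdots\wedge m_{Q(t)}$ of distinct monomials $m_i\in M_t$; group them by the product monomial $m=\prod m_i\in M_{tQ(t)}$, write $\phi_t(x)=[\sum_{m}\phi_t(x)_m]$ with $\phi_t(x)_m$ in the span of wedges with product $m$, and define the state $\Xi_{x,t}=\{m\in M_{tQ(t)}:\phi_t(x)_m\ne0\}$ (for $t=d$ this is the set of monomials occurring in $f$ with nonzero coefficient). Monomials are identified with their exponent vectors in $\mathbb{Z}^{r+1}\subset\mathbb{R}^{r+1}$,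 and $\langle\cdot,\cdot\rangle$ is the standard inner product. $T$ is the diagonal maximal torus of $\mathrm{SL}_{r+1}(k)$; $\gamma=(c_0,\dots,c_r)\in\Gamma(T)\cong\{c\in\mathbb{Z}^{r+1}:\sum c_i=0\}$ denotes $s\mapsto\mathrm{diag}(s^{c_0},\dots,s^{c_r})$, with Euclidean norm $\Vert\gamma\Vert$. Define $|\Delta_{x,t}|=\max_{0\ne\lambda\in\Gamma(T)}\min_{m\in\Xi_{x,t}}\langle\lambda,m\rangle/\Vert\lambda\Vert$ (equivalently the distance from the point $\frac{tQ(t)}{r+1}(1,\dots,1)$ to the convex hull $\Delta_{x,t}$ of $\Xi_{x,t}$, when that point lies outside). *)

(* Defs.v *)
From HB Require Import structures.
From mathcomp Require Import all_boot all_order all_algebra.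
Set Implicit Arguments. Unset Strict Implicit. Unset Printing Implicit Defensive.
Import Order.TTheory GRing.Theory Num.Theory.
Local Open Scope ring_scope.

(* Exponent vectors of monomials in k[x_0,...,x_r]. *)
Definition expo (r : nat) := {ffun 'I_r.+1 -> nat}.

Definition expo_deg (r : nat) (e : expo r) : nat := (\sum_(i < r.+1) e i)%N.

(* M_t : the monomials of degree t, as an explicit duplicate-free list. *)
Definition mons (r t : nat) : seq (expo r) :=
  [seq [ffun i => nat_of_ord (g i)] | g : {ffun 'I_r.+1 -> 'I_t.+1} <- enum {ffun 'I_r.+1 -> 'I_t.+1} &
     (\sum_(i < r.+1) nat_of_ord (g i) == t)%N].

(* Homogeneous form f of degree d, nonzero, given by its coefficients. *)
Definition homog_nonzero (k : fieldType) (r d : nat) (f : expo r -> k) : Prop :=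
  (forall e, f e != 0 -> expo_deg e = d) /\ (exists e, f e != 0).

(* Coefficient of the monomial u in the product f * m. *)
Definition coefMul (k : fieldType) (r : nat) (f : expo r -> k) (m u : expo r) : k :=
  if [forall i, m i <= u i]%N then f [ffun i => (u i - m i)%N] else 0.

Definition prodExp (r Q : nat) (ms : 'I_Q -> expo r) : expo r :=
  [ffun i => (\sum_(j < Q) ms j i)%N].

Definition expo0 (r : nat) : expo r := [ffun => 0%N].

(* The Pluecker coordinate of phi_t(x) at the wedge m_{s 0} /\ ... /\ m_{s (Q-1)}
   (m_a = a-th monomial of M_t): the Q x Q minor of the matrix expressing the
   basis f*n_i (n_i the i-th monomial of M_{t-d}) in the monomial basis of S_t. *)
Definition plucker (k : fieldType) (r d t : nat) (f : expo r -> k)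
    (s : {ffun 'I_(size (mons r (t - d))) -> 'I_(size (mons r t))}) : k :=
  \det (\matrix_(i, j) coefMul f (nth (expo0 r) (mons r (t - d)) i)
                                  (nth (expo0 r) (mons r t) (s j))).

(* The state Xi_{x,t}: product monomials m with phi_t(x)_m <> 0, i.e. for which
   some wedge of distinct monomials with product m has nonzero coordinate. *)
Definition Xi (k : fieldType) (r d t : nat) (f : expo r -> k) : seq (expo r) :=
  undup [seq prodExp (fun j => nth (expo0 r) (mons r t) (s j)) |
          s : {ffun 'I_(size (mons r (t - d))) -> 'I_(size (mons r t))} <-
            enum {ffun 'I_(size (mons r (t - d))) -> 'I_(size (mons r t))}
          & injectiveb s && (plucker f s != 0)].

Arguments Xi {k} r d t f.

(* One-parameter subgroups of the diagonal torus of SL_{r+1}. *)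
Definition in_Gamma (r : nat) (g : {ffun 'I_r.+1 -> int}) : bool :=
  (\sum_(i < r.+1) g i == 0) && (g != [ffun => 0]).

Definition pairing (r : nat) (g : {ffun 'I_r.+1 -> int}) (m : expo r) : int :=
  \sum_(i < r.+1) g i * (m i)%:Z.

(* min_{m in s} <g, m>  (s is nonempty in all uses; 0 by convention otherwise). *)
Definition minPair (r : nat) (g : {ffun 'I_r.+1 -> int}) (s : seq (expo r)) : int :=
  match s with
  | [::] => 0
  | m :: s' => \big[Order.min/pairing g m]_(m' <- s') pairing g m'
  end.

Definition gnorm (R : rcfType) (r : nat) (g : {ffun 'I_r.+1 -> int}) : R :=
  Num.sqrt (\sum_(i < r.+1) ((g i) ^+ 2)%:~R).

(* v = |Delta_{x,t}| = max_{0 <> l in Gamma(T)} min_{m in Xi} <l,m>/||l||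
   (the maximum is attained and equals v). *)
Definition isDelta (R : rcfType) (k : fieldType) (r d t : nat) (f : expo r -> k)
    (v : R) : Prop :=
  (exists2 l, in_Gamma l & (minPair l (Xi r d t f))%:~R / gnorm R l = v) /\
  (forall l, in_Gamma l -> (minPair l (Xi r d t f))%:~R / gnorm R l <= v).

Arguments isDelta {R k} r d t f v.

(* Main.v *)
Require Import Defs.
From HB Require Import structures.
From mathcomp Require Import all_boot all_order all_algebra perm.
From mathcomp Require Import zify ring lra.
Import Order.TTheory GRing.Theory Num.Theory.
Local Open Scope ring_scope.

Fixpoint lexnn (s : seq int) : bool :=
  if s is x :: s' then (0 < x) || ((x == 0) && lexnn s') else true.

Lemma lexnn_head x s : lexnn (x :: s) -> 0 <= x.
Proof. by move=> /= /orP[/ltW|/andP[/eqP-> _]]. Qed.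

Lemma lex_sum0 (I : finType) (T : eqType) (F : T -> I -> int) (Hs : seq T) :
  (forall i, lexnn [seq F h i | h <- Hs]) ->
  (forall h, h \in Hs -> \sum_i F h i = 0) ->
  forall h i, h \in Hs -> F h i = 0.
Proof.
elim: Hs => [//|h0 Hs IH] Hlex Hsum.
have H0 : forall i, F h0 i = 0.
  have ge0 : forall i, 0 <= F h0 i by by move=> i; move: (Hlex i) => /= /lexnn_head.
  have := Hsum h0 (mem_head _ _).
  move=> S i; apply/eqP; rewrite eq_le ge0 andbT.
  have: \sum_j F h0 j >= F h0 i.
    rewrite (bigD1 i) //= lerDl; apply: sumr_ge0 => j _; exact: ge0.
  by rewrite S.
have Hlex' : forall i, lexnn [seq F h i | h <- Hs].
  move=> i; have := Hlex i => /= /orP[|/andP[_ //]].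
  by rewrite H0 ltxx.
move=> h i; rewrite in_cons => /orP[/eqP->//|hin].
apply: IH => // h' h'in; apply: Hsum; by rewrite in_cons h'in orbT.
Qed.

Lemma lexnn_trans (T : Type) (F : T -> int) (G : T -> int) (Hs : seq T) :
  lexnn [seq F h | h <- Hs] -> lexnn [seq G h | h <- Hs] ->
  lexnn [seq F h + G h | h <- Hs].
Proof.
elim: Hs => //= h Hs IH /orP[a|/andP[/eqP a b]] /orP[c|/andP[/eqP c e]].
- by apply/orP; left; apply: addr_gt0.
- by apply/orP; left; rewrite c addr0.
- by apply/orP; left; rewrite a add0r.
- by rewrite a c addr0 eqxx IH // orbT.
Qed.

Lemma lexnn_total (T : Type) (F : T -> int) (Hs : seq T) :
  lexnn [seq F h | h <- Hs] || lexnn [seq - F h | h <- Hs].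
Proof.
elim: Hs => //= h Hs IH.
case: (ltrgtP (F h) 0) => a.
- by rewrite oppr_gt0 ?a ?orbT.
- by [].
- by rewrite a oppr0 eqxx ltxx /= IH.
Qed.

Lemma lexnn_zero (T : Type) (Hs : seq T) : lexnn [seq (0:int) | h <- Hs].
Proof. by elim: Hs => //= h Hs ->; rewrite eqxx orbT. Qed.

Lemma Posz_sum (I : Type) (s : seq I) (P : pred I) (F : I -> nat) :
  ((\sum_(i <- s | P i) F i)%N)%:Z = \sum_(i <- s | P i) (F i)%:Z.
Proof. by rewrite (big_morph Posz PoszD (erefl 0%:Z)). Qed.

Lemma pairingD r (g : {ffun 'I_r.+1 -> int}) (a b c : expo r) :
  (forall x, c x = a x + b x)%N -> pairing g c = pairing g a + pairing g b.
Proof.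
move=> H; rewrite /pairing -big_split /=; apply: eq_bigr => i _.
by rewrite H PoszD mulrDr.
Qed.

Lemma pairing_prodExp r Q (g : {ffun 'I_r.+1 -> int}) (ms : 'I_Q -> expo r) :
  pairing g (prodExp ms) = \sum_(j < Q) pairing g (ms j).
Proof.
rewrite /pairing exchange_big /=; apply: eq_bigr => i _.
by rewrite ffunE Posz_sum mulr_sumr.
Qed.

Lemma mem_mons r t (e : expo r) : (e \in mons r t) = (expo_deg e == t).
Proof.
apply/idP/idP.
  case/mapP => h; rewrite mem_filter => /andP[/eqP hs _] ->.
  apply/eqP; transitivity (\sum_(i < r.+1) nat_of_ord (h i))%N; last exact: hs.
  by apply: eq_bigr => i _; rewrite ffunE.
move=> /eqP hd.
have le : forall i, (e i < t.+1)%N.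
  move=> i; rewrite ltnS -hd /expo_deg (bigD1 i) //=; exact: leq_addr.
apply/mapP; exists [ffun i => (inord (e i) : 'I_t.+1)].
  rewrite mem_filter mem_enum andbT; apply/eqP.
  transitivity (expo_deg e); last exact: hd.
  by apply: eq_bigr => i _; rewrite ffunE inordK.
by apply/ffunP => i; rewrite !ffunE inordK.
Qed.

Lemma uniq_mons r t : uniq (mons r t).
Proof.
rewrite map_inj_uniq.
  by apply: filter_uniq; apply: enum_uniq.
move=> h1 h2 /ffunP E; apply/ffunP => i; apply: val_inj.
by have := E i; rewrite !ffunE.
Qed.

Lemma sum_mons_coord r D (x y : 'I_r.+1) :
  \sum_(n <- mons r D) (n x)%:Z = \sum_(n <- mons r D) (n y)%:Z.
Proof.
pose tau := tperm x y.
pose sw := fun n : expo r => [ffun z => n (tau z)] : expo r.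
have swK : involutive sw.
  by move=> n; apply/ffunP => z; rewrite !ffunE tpermK.
have Hp : perm_eq (map sw (mons r D)) (mons r D).
  apply: uniq_perm; [by rewrite map_inj_uniq ?uniq_mons //; exact: inv_inj | exact: uniq_mons|].
  have degsw : forall n, expo_deg (sw n) = expo_deg n.
    move=> n; rewrite /expo_deg (reindex_inj (@perm_inj _ tau)) /=.
    by apply: eq_bigr => z _; rewrite ffunE tpermK.
  move=> n; apply/mapP/idP => [[m]|hn].
    by rewrite !mem_mons => hm ->; rewrite degsw.
  by exists (sw n); rewrite ?swK // mem_mons degsw -mem_mons.
rewrite -(perm_big _ Hp) big_map; apply: eq_bigr => n _.
by rewrite ffunE tpermL.
Qed.

Lemma sum_pairing_mons r D (g : {ffun 'I_r.+1 -> int}) :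
  \sum_i g i = 0 -> \sum_(n <- mons r D) pairing g n = 0.
Proof.
move=> Hg; rewrite /pairing exchange_big /=.
rewrite (eq_bigr (fun i => g i * \sum_(n <- mons r D) (n ord0)%:Z)).
  by rewrite -mulr_suml Hg mul0r.
by move=> i _; rewrite -mulr_sumr (sum_mons_coord _ _ i ord0).
Qed.

Lemma bigmin_spec r (g : {ffun 'I_r.+1 -> int}) (a : int) (s : seq (expo r)) :
  let B := \big[Order.min/a]_(m <- s) pairing g m in
  [/\ B <= a, (forall m, m \in s -> B <= pairing g m) &
      (B = a \/ exists2 m, m \in s & B = pairing g m)].
Proof.
elim: s => [|x s [IH1 IH2 IH3]] /=; first by rewrite big_nil; split=> //; left.
rewrite big_cons; split.
- by rewrite ge_min IH1 orbT.
- move=> m; rewrite in_cons => /orP[/eqP->|ms]; first by rewrite ge_min lexx.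
  by rewrite ge_min IH2 ?orbT.
- case: (leP (pairing g x) (\big[Order.min/a]_(j <- s) pairing g j)) => _.
    by right; exists x; rewrite ?mem_head.
  case: IH3 => [->|[m ms ->]]; first by left.
  by right; exists m => //; rewrite in_cons ms orbT.
Qed.

Lemma minPair_spec r (g : {ffun 'I_r.+1 -> int}) (s : seq (expo r)) :
  s != [::] ->
  (forall m, m \in s -> minPair g s <= pairing g m) /\
  (exists2 m, m \in s & minPair g s = pairing g m).
Proof.
case: s => // x s _ /=; have [H1 H2 H3] := bigmin_spec _ g (pairing g x) s.
split.
  move=> m; rewrite in_cons => /orP[/eqP->//|]; exact: H2.
case: H3 => [->|[m ms ->]]; first by exists x; rewrite ?mem_head.
by exists m => //; rewrite in_cons ms orbT.
Qed.

Lemma minPair_eq r (g : {ffun 'I_r.+1 -> int}) (s : seq (expo r)) v m0 :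
  m0 \in s -> pairing g m0 = v -> (forall m, m \in s -> v <= pairing g m) ->
  minPair g s = v.
Proof.
move=> m0s <- H.
have sn : s != [::] by apply/eqP => E; rewrite E in m0s.
have [H1 [m1 m1s E]] := minPair_spec _ g _ sn.
by apply/eqP; rewrite eq_le H1 //= E H.
Qed.

Definition Rel r (Hs : seq {ffun 'I_r.+1 -> int}) (a b : expo r) :=
  lexnn [seq pairing h b - pairing h a | h <- Hs].
Arguments Rel {r}.

Lemma Rel_trans r Hs (a b c : expo r) : Rel Hs a b -> Rel Hs b c -> Rel Hs a c.
Proof.
rewrite /Rel => H1 H2.
have := lexnn_trans _ _ _ _ H1 H2.
by rewrite (eq_map (g := fun h => pairing h c - pairing h a)) // => h; ring.
Qed.

Lemma Rel_total r Hs (a b : expo r) : Rel Hs a b || Rel Hs b a.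
Proof.
rewrite /Rel; have := lexnn_total _ (fun h => pairing h b - pairing h a) Hs.
by rewrite (eq_map (f := fun h => - (pairing h b - pairing h a))
                   (g := fun h => pairing h a - pairing h b)) // => h; ring.
Qed.

Lemma lex_min r Hs (l : seq (expo r)) : l != [::] ->
  exists2 e0, e0 \in l & forall e, e \in l -> Rel Hs e0 e.
Proof.
elim: l => // x l IH _.
case: l IH => [|y l] IH.
  exists x; rewrite ?mem_head // => e; rewrite inE => /eqP->.
  by rewrite /Rel (eq_map (g := fun _ => 0)) ?lexnn_zero // => h; rewrite subrr.
have [e1 e1in He1] := IH isT.
case/orP: (Rel_total _ Hs x e1) => R.
  exists x; first exact: mem_head.
  move=> e; rewrite in_cons => /orP[/eqP->|ein].
    by rewrite /Rel (eq_map (g := fun _ => 0)) ?lexnn_zero // => h; rewrite subrr.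
  exact: Rel_trans _ _ _ _ _ R (He1 e ein).
exists e1; first by rewrite in_cons e1in orbT.
move=> e; rewrite in_cons => /orP[/eqP->//|]; exact: He1.
Qed.

Set Implicit Arguments. Unset Strict Implicit.

Definition supp (k : fieldType) r d (f : expo r -> k) :=
  [seq e <- mons r d | f e != 0].

Lemma in_supp (k : fieldType) r d (f : expo r -> k) e :
  homog_nonzero d f -> f e != 0 -> e \in supp d f.
Proof.
by case=> H _ fe; rewrite mem_filter fe mem_mons (H e fe) eqxx.
Qed.

Lemma supp_n0 (k : fieldType) r d (f : expo r -> k) :
  homog_nonzero d f -> supp d f != [::].
Proof.
move=> hf; have [_ [e fe]] := hf.
by apply/eqP => E; have := in_supp hf fe; rewrite E.
Qed.

Lemma w0_le (k : fieldType) r d (f : expo r -> k) g e :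
  homog_nonzero d f -> f e != 0 -> minPair g (supp d f) <= pairing g e.
Proof.
move=> hf fe; have [H _] := minPair_spec _ g _ (supp_n0 hf).
exact: H (in_supp hf fe).
Qed.

Lemma coefMul_neq0 (k : fieldType) r (f : expo r -> k) n u :
  coefMul f n u != 0 -> exists e, f e != 0 /\ forall x, u x = (n x + e x)%N.
Proof.
rewrite /coefMul; case: ifP => [/forallP H fe|]; last by rewrite eqxx.
exists [ffun x => (u x - n x)%N]; split => // x.
by rewrite ffunE subnKC.
Qed.

Lemma sum_nth_pairing r D (g : {ffun 'I_r.+1 -> int}) :
  \sum_(i < size (mons r D)) pairing g (nth (expo0 r) (mons r D) i) =
  \sum_(n <- mons r D) pairing g n.
Proof. by rewrite (big_nth (expo0 r)) big_mkord. Qed.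

Lemma LB (k : fieldType) r d t (f : expo r -> k) (g : {ffun 'I_r.+1 -> int}) :
  homog_nonzero d f -> \sum_i g i = 0 ->
  forall m, m \in Xi r d t f ->
  (size (mons r (t - d)))%:Z * minPair g (supp d f) <= pairing g m.
Proof.
move=> hf hg m; rewrite mem_undup => /mapP [s].
rewrite mem_filter => /andP[/andP[_ hp] _] ->.
move: hp; rewrite /plucker /determinant.
set A := \matrix_(i, j) _.
case: (pickP (fun σ : 'S_(size (mons r (t - d))) => \prod_i A i (σ i) != 0))
  => [σ Hσ _|H0]; last first.
  rewrite big1 ?eqxx // => σ _.
  by have := H0 σ => /negbFE/eqP ->; rewrite mulr0.
rewrite pairing_prodExp (reindex_inj (@perm_inj _ σ)) /=.
have step : forall i : 'I_(size (mons r (t - d))), pairing g (nth (expo0 r) (mons r (t - d)) i) +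
      minPair g (supp d f) <= pairing g (nth (expo0 r) (mons r t) (s (σ i))).
  move=> i; move/prodf_neq0: Hσ => /(_ i isT); rewrite mxE.
  case/coefMul_neq0 => e [fe He].
  by rewrite (pairingD _ g _ _ _ He) lerD2l w0_le.
apply: le_trans (ler_sum _ (fun i _ => step i)).
rewrite big_split /= sum_nth_pairing (sum_pairing_mons _ _ g hg) add0r.
by rewrite sumr_const card_ord -mulr_natl natz.
Qed.

Definition delta r (x : 'I_r.+1) : {ffun 'I_r.+1 -> int} :=
  [ffun y => ((y == x) : nat)%:Z].

Lemma pairing_delta r x (e : expo r) : pairing (delta x) e = (e x)%:Z.
Proof.
rewrite /pairing (bigD1 x) //= big1 ?addr0 => [|y /negbTE ne].
  by rewrite ffunE eqxx mul1r.
by rewrite ffunE ne mul0r.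
Qed.

Definition Hkeys r (g : {ffun 'I_r.+1 -> int}) := g :: [seq delta x | x <- enum 'I_r.+1].

Lemma UB (k : fieldType) r d t (f : expo r -> k) (g : {ffun 'I_r.+1 -> int}) :
  homog_nonzero d f -> \sum_i g i = 0 -> (d <= t)%N ->
  exists2 m, m \in Xi r d t f &
  pairing g m = (size (mons r (t - d)))%:Z * minPair g (supp d f).
Proof.
move=> hf hg ldt.
set ns := mons r (t - d); set ms := mons r t; set Q := size ns.
have [e0 e0in He0] := lex_min _ (Hkeys g) _ (supp_n0 hf).
have fe0 : f e0 != 0 by move: e0in; rewrite mem_filter => /andP[].
have de0 : expo_deg e0 = d by move: e0in; rewrite mem_filter mem_mons => /andP[_ /eqP].
have pe0 : pairing g e0 = minPair g (supp d f).
  have [H1 [e1 e1in E]] := minPair_spec _ g _ (supp_n0 hf).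
  apply/eqP; rewrite eq_le (H1 _ e0in) andbT E.
  by have := He0 e1 e1in; rewrite /Rel /= => /lexnn_head; rewrite subr_ge0.
pose u (j : 'I_Q) : expo r := [ffun x => (e0 x + nth (expo0 r) ns j x)%N].
have uin : forall j, u j \in ms.
  move=> j; rewrite mem_mons /expo_deg.
  rewrite (eq_bigr (fun x => e0 x + nth (expo0 r) ns j x)%N); last by move=> x _; rewrite ffunE.
  rewrite big_split /= -/(expo_deg e0) de0.
  have : nth (expo0 r) ns j \in ns by rewrite mem_nth.
  by rewrite mem_mons => /eqP; rewrite /expo_deg => ->; rewrite subnKC.
pose s : {ffun 'I_Q -> 'I_(size ms)} :=
  [ffun j => Ordinal (elimT idP (etrans (index_mem (u j) ms) (uin j)))].
have nths : forall j, nth (expo0 r) ms (s j) = u j.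
  by move=> j; rewrite ffunE /= nth_index.
have nth_inj : forall i j : 'I_Q, nth (expo0 r) ns i = nth (expo0 r) ns j -> i = j.
  move=> i j E; apply: val_inj; apply/eqP.
  by rewrite -(nth_uniq (expo0 r) (ltn_ord i) (ltn_ord j) (uniq_mons _ _)) E.
have sinj : injective s.
  move=> i j E; apply: nth_inj; apply/ffunP => x.
  have := congr1 (fun a : 'I_(size ms) => nth (expo0 r) ms a x) E.
  by rewrite /= !nths !ffunE => /addnI.
pose A : 'M[k]_Q := \matrix_(i, j) coefMul f (nth (expo0 r) ns i) (nth (expo0 r) ms (s j)).
have key : forall σ : 'S_Q, (forall i, A i (σ i) != 0) -> σ = 1%g.
  move=> σ Hσ.
  pose F (h : {ffun 'I_r.+1 -> int}) (i : 'I_Q) :=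
    pairing h (nth (expo0 r) ns (σ i)) - pairing h (nth (expo0 r) ns i).
  have lexF : forall i, lexnn [seq F h i | h <- Hkeys g].
    move=> i; have := Hσ i; rewrite mxE nths => /coefMul_neq0 [e [fe He]].
    have := He0 e (in_supp hf fe); rewrite /Rel.
    congr (is_true (lexnn _)); apply: eq_map => h; rewrite /F.
    have E1 := pairingD _ h _ _ _ He.
    have E2 : pairing h (u (σ i)) = pairing h e0 + pairing h (nth (expo0 r) ns (σ i)).
      by apply: pairingD => x; rewrite ffunE.
    have : pairing h e + pairing h (nth (expo0 r) ns i) =
           pairing h e0 + pairing h (nth (expo0 r) ns (σ i)).
      by rewrite -E2 E1 addrC.
    move=> E; lia.
  have sumF : forall h, h \in Hkeys g -> \sum_i F h i = 0.
    move=> h _; rewrite /F sumrB.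
    have -> : \sum_(i : 'I_Q) pairing h (nth (expo0 r) ns (σ i)) =
              \sum_(i : 'I_Q) pairing h (nth (expo0 r) ns i).
      by rewrite [RHS](reindex_inj (@perm_inj _ σ)).
    by rewrite subrr.
  apply/permP => i; rewrite perm1; apply: nth_inj; apply/ffunP => x.
  have := lex_sum0 _ _ F (Hkeys g) lexF sumF (delta x) i.
  rewrite /F !pairing_delta => /(_ _)/eqP; rewrite subr_eq0 => /(_ _)/eqP.
  move=> H; apply/eqP; rewrite -eqz_nat; apply/eqP; apply: H.
  by rewrite in_cons map_f ?mem_enum ?orbT.
have pl : plucker f s != 0.
  rewrite /plucker /determinant -/A (bigD1 (1%g : 'S_Q)) //= [X in _ + X]big1 ?addr0.
    rewrite odd_perm1 expr0 mul1r. apply/prodf_neq0 => i _.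
    rewrite perm1 mxE nths /coefMul.
    have -> : [forall x, nth (expo0 r) ns i x <= u i x]%N.
      by apply/forallP => x; rewrite ffunE leq_addl.
    rewrite (_ : [ffun x => _] = e0) //.
    by apply/ffunP => x; rewrite !ffunE addnK.
  move=> σ nσ; apply/eqP; rewrite mulf_eq0; apply/orP; right.
  apply: contraTT nσ => hp; apply/negPn/eqP; apply: key.
  by move/prodf_neq0: hp => H i; exact: H.
exists (prodExp (fun j => nth (expo0 r) ms (s j))).
  rewrite mem_undup; apply/mapP; exists s => //.
  rewrite mem_filter pl andbT; apply/andP; split; first exact/injectiveP.
  by rewrite mem_enum.
rewrite pairing_prodExp.
rewrite (eq_bigr (fun j : 'I_Q => pairing g e0 + pairing g (nth (expo0 r) ns j))).
  rewrite big_split /= sum_nth_pairing (sum_pairing_mons _ _ g hg) addr0.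
  by rewrite sumr_const card_ord -mulr_natl natz pe0.
by move=> j _; rewrite nths; apply: pairingD => x; rewrite ffunE.
Qed.

Lemma minPair_Xi (k : fieldType) r d t (f : expo r -> k) (g : {ffun 'I_r.+1 -> int}) :
  homog_nonzero d f -> \sum_i g i = 0 -> (d <= t)%N ->
  minPair g (Xi r d t f) = (size (mons r (t - d)))%:Z * minPair g (supp d f).
Proof.
move=> hf hg ldt; have [m min E] := UB hf hg ldt.
apply: (minPair_eq _ _ _ _ _ min E) => m' m'in; exact: LB hf hg _ m'in.
Qed.

Lemma size_mons0 r : size (mons r 0) = 1%N.
Proof.
have all0 : forall e, e \in mons r 0 -> e = expo0 r.
  move=> e; rewrite mem_mons /expo_deg => /eqP H; apply/ffunP => x.
  rewrite ffunE; apply/eqP; rewrite -leqn0 -H (bigD1 x) //=; exact: leq_addr.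
have in0 : expo0 r \in mons r 0.
  by rewrite mem_mons /expo_deg big1 // => x _; rewrite ffunE.
have : perm_eq (mons r 0) [:: expo0 r].
  apply: uniq_perm; rewrite ?uniq_mons // => e; rewrite inE.
  apply/idP/eqP => [/all0 //|->//].
by move/perm_size.
Qed.

Lemma size_mons_gt0 r D : (0 < size (mons r D))%N.
Proof.
have : [ffun x : 'I_r.+1 => if x == ord0 then D else 0%N] \in mons r D.
  rewrite mem_mons /expo_deg (bigD1 ord0) //= big1 => [|x /negbTE nx].
    by rewrite ffunE eqxx addn0.
  by rewrite ffunE nx.
by case: (mons r D).
Qed.

Unset Implicit Arguments. Set Strict Implicit.

Theorem mainTheorem2 (k : closedFieldType) (r d D : nat) (f : expo r -> k)
    (g : {ffun 'I_r.+1 -> int}) :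
  homog_nonzero d f -> in_Gamma g ->
  minPair g (Xi r d (d + D) f) = (size (mons r D))%:Z * minPair g (Xi r d d f) /\
  (forall (R : rcfType) (v : R),
     isDelta r d d f v <-> isDelta r d (d + D) f ((size (mons r D))%:R * v)).
Proof.
move=> hf hG.
have hkey : forall l : {ffun 'I_r.+1 -> int}, in_Gamma l ->
    minPair l (Xi r d (d + D) f) = (size (mons r D))%:Z * minPair l (Xi r d d f).
  move=> l /andP[/eqP hl _].
  by rewrite !minPair_Xi // ?leq_addr // addKn subnn size_mons0 mul1r.

split; first exact: hkey.
move=> R v.
set N := size (mons r D).
have Npos : (0 : R) < N%:R by rewrite ltr0n size_mons_gt0.
have val : forall l, in_Gamma l ->
    (minPair l (Xi r d (d + D) f))%:~R / Defs.gnorm R l =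
    N%:R * ((minPair l (Xi r d d f))%:~R / Defs.gnorm R l).
  by move=> l hl; rewrite hkey // intrM mulrA.
rewrite /isDelta; split.
  case=> [[l hl E] H]; split.
    by exists l => //; rewrite val // E.
  by move=> l' hl'; rewrite val // ler_pM2l // H.
case=> [[l hl E] H]; split.
  exists l => //; apply: (mulfI (lt0r_neq0 Npos)); by rewrite -val.
by move=> l' hl'; rewrite -(ler_pM2l Npos) -val // H.
Qed.
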